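(* Let $[\frac pq]$ be a rational 2-tangle ($\gcd(p,q)=1$). Then $[\frac pq]$ is $5$-move equivalent to: $[\frac10]$ if $q\equiv 0$, $p\equiv\pm1\pmod 5$; $[\frac25]$ if $q\equiv0$, $p\equiv\pm2\pmod 5$; $[0]$ if $q\equiv\pm1$, $p\equiv0\pmod5$; $[\frac52]$ if $q\equiv\pm2$, $p\equiv 0\pmod5$; $[-1]$ if $q\equiv\pm1$, $p\equiv-q\pmod5$; $[\frac32]$ if $q\equiv\pm2$, $p\equiv -q\pmod 5$; $[1]$ if $q\equiv\pm1$, $p\equiv q\pmod5$; $[-\frac32]$ if $q\equiv\pm2$, $p\equiv q\pmod5$; $[-2]$ if $q\equiv\pm1$, $p\equiv-2q\pmod5$; $[\frac12]$ if $q\equiv\pm2$, $p\equiv-2q\pmod5$; $[2]$ if $q\equiv\pm1$, $p\equiv 2q\pmod5$; $[-\frac12]$ if $q\equiv\pm2$, $p\equiv2q\pmod5$. Succinctly, two rational tangles $[\frac pq]$ and $[\frac{p'}{q'}]$ are $5$-move equivalent if and only if either $q\equiv q'$ and $p\equiv p'\pmod 5$, or $q\equiv -q'$ and $p\equiv -p'\pmod5$.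
   Context: 2-tangles are considered in a ball with four boundary points NW, NE, SW, SE, up to isotopy fixing the boundary. $[\frac pq]$ denotes the rational tangle with fraction $p/q\in\mathbb Q\cup\{\infty\}$ in Conway's notation: $[0]$ is two horizontal arcs (NW–NE, SW–SE), $[\frac10]$ two vertical arcs, $[n]$ is $|n|$ horizontal half-twists, $[\frac1n]$ is $|n|$ vertical half-twists. A $5$-move replaces a sub-tangle $[0]$ (inside a ball meeting the tangle in two arcs) by the tangle $[5]$ of five half-twists; $5$-move equivalence of tangles is generated by isotopy rel boundary and $5$-moves and their inverses performed inside the tangle ball. *)

(* Defs.v *)
(* Combinatorial model of unoriented 2-tangles (in a ball with
   boundary points NW, NE, SW, SE) up to isotopy rel boundary:
   tangle diagrams in Morse position, i.e. words of elementary slices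
   (cup / cap / crossing at a given position), read from BOTTOM to TOP.
   The bottom endpoints are SW (position 0), SE (position 1), the top ones
   NW (position 0), NE (position 1).  Isotopy rel boundary is the equivalence
   generated by the standard complete set of local moves for Morse-position
   diagrams (far commutation, zig-zag, Reidemeister I, II, III, and sliding a
   strand past a critical point). *)
From Stdlib Require Import List ZArith Arith Relations.
Import ListNotations.

Inductive kind : Type :=
| KCup
| KCap
| KCrs (s : bool).    (* crossing of two adjacent strands; [true] is the
                         crossing of the tangle [1] *)

(* [G k i] : the elementary slice of kind [k] whose leftmost affected strand
   is at position [i] (positions counted from the left, starting at 0). *)
Inductive gen : Type := G (k : kind) (i : nat).

Definition din (k : kind) : nat := match k with KCup => 0 | _ => 2 end.
Definition dout (k : kind) : nat := match k with KCap => 0 | _ => 2 end.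

Definition gen_arity (n : nat) (g : gen) : option nat :=
  match g with
  | G k i => if i + din k <=? n then Some (n - din k + dout k) else None
  end.

Fixpoint arity (n : nat) (w : list gen) : option nat :=
  match w with
  | [] => Some n
  | g :: w' => match gen_arity n g with
               | Some m => arity m w'
               | None => None
               end
  end.

Definition tangle2 (w : list gen) : Prop := arity 2 w = Some 2.

Definition X (s : bool) (i : nat) : gen := G (KCrs s) i.

Inductive isotopy_move : list gen -> list gen -> Prop :=
| mv_far a b i d :
    isotopy_move [G a i; G b (i + dout a + d)] [G b (i + din a + d); G a i]
| mv_zigzag_l i : isotopy_move [G KCup (S i); G KCap i] []
| mv_zigzag_r i : isotopy_move [G KCup i; G KCap (S i)] []
| mv_R1_cup s i : isotopy_move [G KCup i; X s i] [G KCup i]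
| mv_R1_cap s i : isotopy_move [X s i; G KCap i] [G KCap i]
| mv_R2 s i : isotopy_move [X s i; X (negb s) i] []
| mv_R3 s i : isotopy_move [X s i; X s (S i); X s i] [X s (S i); X s i; X s (S i)]
| mv_slide_cup s i :
    isotopy_move [G KCup i; X s (S i)] [G KCup (S i); X (negb s) i]
| mv_slide_cap s i :
    isotopy_move [X s (S i); G KCap i] [X (negb s) i; G KCap (S i)].

Definition local_step (mv : list gen -> list gen -> Prop) (w w' : list gen) : Prop :=
  exists a l r b k m,
    w = a ++ l ++ b /\ w' = a ++ r ++ b /\
    arity 2 a = Some k /\ arity k l = Some m /\ arity k r = Some m /\ mv l r.

Definition isotopic : list gen -> list gen -> Prop :=
  clos_refl_sym_trans _ (local_step isotopy_move).

Definition shift (s : nat) (w : list gen) : list gen :=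
  map (fun g => match g with G k i => G k (i + s) end) w.

Definition zero_tangle : list gen := [G KCap 0; G KCup 0].
Definition infty_tangle : list gen := [].
Definition one_tangle : list gen := [X true 0].
Definition mone_tangle : list gen := [X false 0].

(* horizontal sum T + S : T on the left, S on the right, NE(T)-NW(S) and
   SE(T)-SW(S) joined *)
Definition hsum (T S : list gen) : list gen :=
  [G KCup 1] ++ T ++ shift 2 S ++ [G KCap 1].
(* vertical product T * S : T below S *)
Definition vprod (T S : list gen) : list gen := T ++ S.

Fixpoint htwist (n : nat) : list gen :=
  match n with
  | O => zero_tangle
  | S m => hsum (htwist m) one_tangle
  end.

Definition five_move (l r : list gen) : Prop :=
  exists i, l = shift i zero_tangle /\ r = shift i (htwist 5).

Definition five_equiv : list gen -> list gen -> Prop :=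
  clos_refl_sym_trans _
    (fun w w' => local_step isotopy_move w w' \/ local_step five_move w w').

(* [rational T p q] : T is a rational tangle diagram with fraction p/q,
   built from [0] or [1/0] by horizontal/vertical twisting (Conway):
   F(T + [±1]) = F(T) ± 1,  1/F(T * [±1]) = 1/F(T) ± 1. *)
Inductive rational : list gen -> Z -> Z -> Prop :=
| rat_zero : rational zero_tangle 0 1
| rat_infty : rational infty_tangle 1 0
| rat_hplus T p q : rational T p q -> rational (hsum T one_tangle) (p + q) q
| rat_hminus T p q : rational T p q -> rational (hsum T mone_tangle) (p - q) q
| rat_vplus T p q : rational T p q -> rational (vprod T one_tangle) p (q + p)
| rat_vminus T p q : rational T p q -> rational (vprod T mone_tangle) p (q - p).

Definition cong5 (a b : Z) : Prop := ((a - b) mod 5 = 0)%Z.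
Definition pm5 (a b : Z) : Prop := cong5 a b \/ cong5 a (- b).

Definition five_equiv_rat (T : list gen) (a b : Z) : Prop :=
  forall T', rational T' a b -> five_equiv T T'.

(* Main.v *)
Require Import Defs.
From Stdlib Require Import List ZArith Arith Relations Lia Bool.
Import ListNotations.

Lemma arity_app n u v : arity n (u ++ v) = match arity n u with Some m => arity m v | None => None end.
Proof. revert n; induction u as [|g u IH]; intros n; simpl; [reflexivity|]. destruct (gen_arity n g); auto. Qed.

Lemma garity_lift n j g m : gen_arity n g = Some m -> gen_arity (n + j) g = Some (m + j).
Proof. destruct g as [k i]; simpl. intros E; destruct (Nat.leb_spec (i + din k) n) as [Hle|Hle]; inversion E; subst.
  destruct (Nat.leb_spec (i + din k) (n + j)); [f_equal; lia | lia]. Qed.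

Lemma arity_lift n j w m : arity n w = Some m -> arity (n + j) w = Some (m + j).
Proof. revert n; induction w as [|g w IH]; intros n H; simpl in *. { inversion H; auto. }
  destruct (gen_arity n g) eqn:E; [|discriminate]. rewrite (garity_lift _ _ _ _ E). auto. Qed.

Lemma five_equiv_app_r w w' Q : five_equiv w w' -> five_equiv (w ++ Q) (w' ++ Q).
Proof. induction 1 as [x y H| | |].
  - apply rst_step. destruct H as [H|H]; [left|right];
    destruct H as (a & l & r & b & k & m & E1 & E2 & H1 & H2 & H3 & H4);
    exists a, l, r, (b ++ Q), k, m; subst; rewrite <- !app_assoc; repeat split; auto.
  - apply rst_refl.
  - apply rst_sym; auto.
  - eapply rst_trans; eauto. Qed.


Lemma five_equiv_pre P j w w' : arity 2 P = Some (2 + j) -> five_equiv w w' -> five_equiv (P ++ w) (P ++ w').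
Proof. intros HP. induction 1 as [x y H| | |].
  - apply rst_step. destruct H as [H|H]; [left|right];
    destruct H as (a & l & r & b & k & m & E1 & E2 & H1 & H2 & H3 & H4);
    exists (P ++ a), l, r, b, (k + j), (m + j); subst; rewrite <- !app_assoc; repeat split; auto;
    try (rewrite arity_app, HP; apply arity_lift; auto); apply arity_lift; auto.
  - apply rst_refl.
  - apply rst_sym; auto.
  - eapply rst_trans; eauto. Qed.

Definition kind_eqb (a b : kind) : bool :=
  match a, b with KCup, KCup => true | KCap, KCap => true | KCrs s, KCrs t => Bool.eqb s t | _, _ => false end.
Definition gen_eqb (g h : gen) : bool :=
  match g, h with G a i, G b j => kind_eqb a b && Nat.eqb i j end.
Lemma gen_eqb_eq g h : gen_eqb g h = true -> g = h.
Proof. destruct g as [a i], h as [b j]; simpl; intros E; apply andb_prop in E as [E1 E2].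
  apply Nat.eqb_eq in E2; subst. destruct a, b; simpl in E1; try discriminate; auto.
  apply Bool.eqb_prop in E1; subst; auto. Qed.
Fixpoint prefixb (l w : list gen) : bool :=
  match l, w with [], _ => true | x :: l', y :: w' => gen_eqb x y && prefixb l' w' | _, _ => false end.
Lemma prefixb_spec l w : prefixb l w = true -> w = l ++ skipn (length l) w.
Proof. revert w; induction l as [|x l IH]; intros [|y w]; simpl; try discriminate; auto.
  intros E; apply andb_prop in E as [E1 E2]; apply gen_eqb_eq in E1; subst; f_equal; auto. Qed.

Inductive rule : Type :=
| RFar (a b : kind) (i d : nat) | RZl (i : nat) | RZr (i : nat)
| RR1cup (s : bool) (i : nat) | RR1cap (s : bool) (i : nat) | RR2 (s : bool) (i : nat)
| RR3 (s : bool) (i : nat) | RScup (s : bool) (i : nat) | RScap (s : bool) (i : nat)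
| RFive (i : nat).

Definition rlhs (r : rule) : list gen :=
  match r with
  | RFar a b i d => [G a i; G b (i + dout a + d)]
  | RZl i => [G KCup (S i); G KCap i]
  | RZr i => [G KCup i; G KCap (S i)]
  | RR1cup s i => [G KCup i; X s i]
  | RR1cap s i => [X s i; G KCap i]
  | RR2 s i => [X s i; X (negb s) i]
  | RR3 s i => [X s i; X s (S i); X s i]
  | RScup s i => [G KCup i; X s (S i)]
  | RScap s i => [X s (S i); G KCap i]
  | RFive i => Defs.shift i zero_tangle
  end.
Definition rrhs (r : rule) : list gen :=
  match r with
  | RFar a b i d => [G b (i + din a + d); G a i]
  | RZl i => []
  | RZr i => []
  | RR1cup s i => [G KCup i]
  | RR1cap s i => [G KCap i]
  | RR2 s i => []
  | RR3 s i => [X s (S i); X s i; X s (S i)]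
  | RScup s i => [G KCup (S i); X (negb s) i]
  | RScap s i => [X (negb s) i; G KCap (S i)]
  | RFive i => Defs.shift i (htwist 5)
  end.
Lemma rule_sound r : isotopy_move (rlhs r) (rrhs r) \/ five_move (rlhs r) (rrhs r).
Proof. destruct r; simpl; try (left; constructor). right; exists i; auto. Qed.

Definition step : Type := (nat * rule * bool)%type.
Definition apply_step (n : nat) (w : list gen) (st : step) : option (list gen) :=
  let '(p, r, dir) := st in
  let l := if dir then rlhs r else rrhs r in
  let r' := if dir then rrhs r else rlhs r in
  let a := firstn p w in let rest := skipn p w in
  if prefixb l rest then
    match arity n a with
    | Some k => match arity k l, arity k r' with
                | Some m1, Some m2 => if Nat.eqb m1 m2 then Some (a ++ r' ++ skipn (length l) rest) else None
                | _, _ => None end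
    | None => None end
  else None.

Lemma local_step_lift mv P n a l r b k m : arity 2 P = Some n -> arity n a = Some k ->
  arity k l = Some m -> arity k r = Some m -> mv l r ->
  local_step mv (P ++ a ++ l ++ b) (P ++ a ++ r ++ b).
Proof. intros HP Ha Hl Hr H. exists (P ++ a), l, r, b, k, m. rewrite <- !app_assoc.
  repeat split; auto. rewrite arity_app, HP; auto. Qed.

Lemma apply_step_sound n w st w' : apply_step n w st = Some w' ->
  forall P, arity 2 P = Some n -> five_equiv (P ++ w) (P ++ w').
Proof. destruct st as [[p r] dir]. unfold apply_step. intros E P HP.
  set (l := if dir then rlhs r else rrhs r) in *. set (r' := if dir then rrhs r else rlhs r) in *.
  destruct (prefixb l (skipn p w)) eqn:Ep; [|discriminate].
  destruct (arity n (firstn p w)) as [k|] eqn:Ea; [|discriminate].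
  destruct (arity k l) as [m1|] eqn:El; [|discriminate].
  destruct (arity k r') as [m2|] eqn:Er; [|discriminate].
  destruct (Nat.eqb_spec m1 m2); [|discriminate]. inversion E; subst; clear E.
  apply prefixb_spec in Ep.
  assert (Hw : w = firstn p w ++ l ++ skipn (length l) (skipn p w)).
  { rewrite <- Ep. symmetry; apply firstn_skipn. }
  rewrite Hw at 1.
  destruct dir; subst l r'.
  - apply rst_step. destruct (rule_sound r) as [H|H]; [left|right]; eapply local_step_lift; eauto.
  - apply rst_sym; apply rst_step. destruct (rule_sound r) as [H|H]; [left|right]; eapply local_step_lift; eauto.
Qed.

Fixpoint run (n : nat) (w : list gen) (sts : list step) : option (list gen) :=
  match sts with [] => Some w | st :: sts' => match apply_step n w st with Some w1 => run n w1 sts' | None => None end end.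

Lemma run_sound n sts : forall w w', run n w sts = Some w' ->
  forall P, arity 2 P = Some n -> five_equiv (P ++ w) (P ++ w').
Proof. induction sts as [|st sts IH]; simpl; intros w w' E P HP.
  - inversion E; subst; apply rst_refl.
  - destruct (apply_step n w st) as [w1|] eqn:E1; [|discriminate].
    eapply rst_trans; [eapply apply_step_sound; eauto | eapply IH; eauto]. Qed.

Lemma run_sound0 sts w w' : run 2 w sts = Some w' -> five_equiv w w'.
Proof. intros E. apply (run_sound 2 sts w w' E [] eq_refl). Qed.

Lemma commute_block T : forall n m, arity n T = Some m -> forall k e r P Q,
  arity 2 P = Some (n + e + din k + r) ->
  five_equiv (P ++ G k (n+e) :: T ++ Q) (P ++ T ++ G k (m+e) :: Q).
Proof.
  induction T as [|[a i] T IH]; intros n m HT k e r P Q HP; simpl in HT.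
  - inversion HT; subst; apply rst_refl.
  - destruct (Nat.leb_spec (i + din a) n) as [Hle|Hle]; [|discriminate].
    set (n' := n - din a + dout a) in *.
    eapply rst_trans.
    + apply rst_sym, rst_step; left.
      exists P, [G a i; G k (n' + e)], [G k (n + e); G a i], (T ++ Q),
        (n + e + din k + r), (n' + e + dout k + r).
      split; [reflexivity|]. split; [reflexivity|]. split; [exact HP|]. split; [|split].
      * simpl. destruct (Nat.leb_spec (i + din a) (n + e + din k + r)); [|lia].
        destruct (Nat.leb_spec (n' + e + din k) (n + e + din k + r - din a + dout a)); [|lia].
        f_equal; lia.
      * simpl. destruct (Nat.leb_spec (n + e + din k) (n + e + din k + r)); [|lia].
        destruct (Nat.leb_spec (i + din a) (n + e + din k + r - din k + dout k)); [|lia].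
        f_equal; lia.
      * replace (n' + e) with (i + dout a + (n - i - din a + e)) by lia.
        replace (n + e) with (i + din a + (n - i - din a + e)) by lia.
        apply mv_far.
    + specialize (IH n' m HT k e r (P ++ [G a i]) Q).
      rewrite <- !app_assoc in IH. simpl in IH. apply IH.
      rewrite arity_app, HP. simpl. destruct (Nat.leb_spec (i + din a) (n + e + din k + r)); [|lia].
      f_equal; lia.
Qed.

Inductive gop := Oh | OH | Ov | OV.
Definition op (x : gop) (T : list gen) : list gen :=
  match x with Oh => hsum T one_tangle | OH => hsum T mone_tangle
             | Ov => vprod T one_tangle | OV => vprod T mone_tangle end.
Definition act (w : list gop) (T : list gen) : list gen := fold_right op T w.
Fixpoint tail (w : list gop) : list gen :=
  match w with
  | [] => [G KCap 2]
  | Ov :: w' => tail w' ++ [X true 0]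
  | OV :: w' => tail w' ++ [X false 0]
  | Oh :: w' => G KCup 3 :: tail w' ++ [X true 2; G KCap 1]
  | OH :: w' => G KCup 3 :: tail w' ++ [X false 2; G KCap 1]
  end.

Lemma tail_lemma w T : tangle2 T -> five_equiv (act w T) ([G KCup 1] ++ T ++ tail w).
Proof.
  intros HT; induction w as [|x w IH]; simpl.
  - eapply rst_trans.
    + apply (run_sound0 [(0, RZr 1, false)] T ([G KCup 1; G KCap 2] ++ T)). reflexivity.
    + pose proof (commute_block T 2 2 HT KCap 0 0 [G KCup 1] []) as H. simpl in H.
      rewrite app_nil_r in H. apply H. reflexivity.
  - destruct x; simpl.
    + eapply rst_trans.
      * apply (five_equiv_pre [G KCup 1] 2); [reflexivity|].
        apply five_equiv_app_r. exact IH.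
      * simpl. eapply rst_trans.
        -- apply (run_sound0 [(0, RFar KCup KCup 1 0, false)]). reflexivity.
        -- simpl. pose proof (commute_block T 2 2 HT KCup 1 1 [G KCup 1]) as H. simpl in H.
           rewrite <- !app_assoc. apply H. reflexivity.
    + eapply rst_trans.
      * apply (five_equiv_pre [G KCup 1] 2); [reflexivity|].
        apply five_equiv_app_r. exact IH.
      * simpl. eapply rst_trans.
        -- apply (run_sound0 [(0, RFar KCup KCup 1 0, false)]). reflexivity.
        -- simpl. pose proof (commute_block T 2 2 HT KCup 1 1 [G KCup 1]) as H. simpl in H.
           rewrite <- !app_assoc. apply H. reflexivity.
    + unfold vprod. eapply rst_trans; [apply five_equiv_app_r; exact IH|].
      rewrite <- !app_assoc. apply rst_refl.
    + unfold vprod. eapply rst_trans; [apply five_equiv_app_r; exact IH|].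
      rewrite <- !app_assoc. apply rst_refl.
Qed.

Lemma arity_shift j w : forall n m, arity n w = Some m -> arity (j + n) (Defs.shift j w) = Some (j + m).
Proof. induction w as [|[k i] w IH]; intros n m H; simpl in *. { inversion H; auto. }
  destruct (Nat.leb_spec (i + din k) n); [|discriminate].
  destruct (Nat.leb_spec (i + j + din k) (j + n)); [|lia].
  replace (j + n - din k + dout k) with (j + (n - din k + dout k)) by lia. auto. Qed.

Lemma tangle2_hsum T S : tangle2 T -> tangle2 S -> tangle2 (hsum T S).
Proof. unfold tangle2, hsum; intros HT HS. simpl.
  apply (arity_lift _ 2) in HT. simpl in HT. rewrite arity_app, HT.
  apply (arity_shift 2) in HS. simpl in HS. rewrite arity_app, HS. reflexivity.
Qed.

Lemma tangle2_op x T : tangle2 T -> tangle2 (op x T).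
Proof. intros HT; destruct x; simpl.
  - apply tangle2_hsum; auto. reflexivity.
  - apply tangle2_hsum; auto. reflexivity.
  - unfold tangle2, vprod in *. rewrite arity_app, HT. reflexivity.
  - unfold tangle2, vprod in *. rewrite arity_app, HT. reflexivity.
Qed.

Lemma tangle2_act w T : tangle2 T -> tangle2 (act w T).
Proof. intros HT; induction w; simpl; auto. apply tangle2_op; auto. Qed.

Lemma op_cong x T T' : five_equiv T T' -> five_equiv (op x T) (op x T').
Proof. intros H; destruct x; simpl; unfold hsum, vprod.
  - apply (five_equiv_pre [G KCup 1] 2); [reflexivity|]. apply five_equiv_app_r; auto.
  - apply (five_equiv_pre [G KCup 1] 2); [reflexivity|]. apply five_equiv_app_r; auto.
  - apply five_equiv_app_r; auto.
  - apply five_equiv_app_r; auto.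
Qed.

Lemma act_cong w T T' : five_equiv T T' -> five_equiv (act w T) (act w T').
Proof. intros H; induction w; simpl; auto. apply op_cong; auto. Qed.

Lemma act_app u v T : act (u ++ v) T = act u (act v T).
Proof. unfold act. apply fold_right_app. Qed.

Lemma gen_rel r1 r2 sts : run 4 (tail r1) sts = Some (tail r2) ->
  forall T, tangle2 T -> five_equiv (act r1 T) (act r2 T).
Proof. intros E T HT. eapply rst_trans; [apply tail_lemma; auto|].
  eapply rst_trans; [|apply rst_sym, tail_lemma; auto].
  rewrite !app_assoc. eapply run_sound; eauto. simpl.
  apply (arity_lift _ 2) in HT. exact HT. Qed.

Definition gop_eqb (a b : gop) : bool :=
  match a, b with Oh, Oh | OH, OH | Ov, Ov | OV, OV => true | _, _ => false end.
Fixpoint gw_eqb (u v : list gop) : bool :=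
  match u, v with [], [] => true | a :: u', b :: v' => gop_eqb a b && gw_eqb u' v' | _, _ => false end.
Lemma gw_eqb_eq u v : gw_eqb u v = true -> u = v.
Proof. revert v; induction u as [|a u IH]; intros [|b v]; simpl; try discriminate; auto.
  intros E; apply andb_prop in E as [E1 E2]. f_equal; auto. destruct a, b; simpl in E1; try discriminate; auto. Qed.
Fixpoint gw_prefixb (l w : list gop) : bool :=
  match l, w with [], _ => true | x :: l', y :: w' => gop_eqb x y && gw_prefixb l' w' | _, _ => false end.
Lemma gw_prefixb_spec l w : gw_prefixb l w = true -> w = l ++ skipn (length l) w.
Proof. revert w; induction l as [|x l IH]; intros [|y w]; simpl; try discriminate; auto.
  intros E; apply andb_prop in E as [E1 E2]. f_equal; auto. destruct x, y; simpl in E1; try discriminate; auto. Qed.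

Definition gstep : Type := (nat * nat * bool * bool)%type.
Definition apply_g (R E : list (list gop * list gop)) (w : list gop) (st : gstep) : option (list gop) :=
  let '(p, j, dir, isend) := st in
  match nth_error (if isend then E else R) j with
  | Some (s, t) =>
    let l := if dir then s else t in let r := if dir then t else s in
    if isend then
      let q := length w - length l in
      if andb (Nat.leb (length l) (length w)) (gw_eqb (skipn q w) l) then Some (firstn q w ++ r) else None
    else
      if gw_prefixb l (skipn p w) then Some (firstn p w ++ r ++ skipn (length l) (skipn p w)) else None
  | None => None end.

Definition Rsound (R : list (list gop * list gop)) : Prop :=
  forall s t, In (s, t) R -> forall T, tangle2 T -> five_equiv (act s T) (act t T).
Definition Esound (E : list (list gop * list gop)) : Prop :=
  forall s t, In (s, t) E -> five_equiv (act s []) (act t []).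

Lemma tangle2_nil : tangle2 [].
Proof. reflexivity. Qed.

Lemma apply_g_sound R E w st w' : Rsound R -> Esound E -> apply_g R E w st = Some w' ->
  five_equiv (act w []) (act w' []).
Proof.
  intros HR HE. destruct st as [[[p j] dir] isend]. unfold apply_g.
  destruct (nth_error (if isend then E else R) j) as [[s t]|] eqn:En; [|discriminate].
  apply nth_error_In in En.
  destruct isend.
  - set (l := if dir then s else t). set (r := if dir then t else s).
    destruct (andb (Nat.leb (length l) (length w)) (gw_eqb (skipn (length w - length l) w) l)) eqn:C; [|discriminate].
    intros Hw; inversion Hw; subst; clear Hw.
    apply andb_prop in C as [_ C]. apply gw_eqb_eq in C.
    rewrite <- (firstn_skipn (length w - length l) w) at 1. rewrite C, !act_app.
    apply act_cong. destruct dir; subst l r; simpl; [apply HE; auto| apply rst_sym, HE; auto].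
  - set (l := if dir then s else t). set (r := if dir then t else s).
    destruct (gw_prefixb l (skipn p w)) eqn:C; [|discriminate].
    intros Hw; inversion Hw; subst; clear Hw.
    apply gw_prefixb_spec in C.
    set (rest := skipn (length l) (skipn p w)) in *.
    rewrite <- (firstn_skipn p w) at 1. rewrite C, !act_app.
    apply act_cong. assert (HT := tangle2_act rest [] tangle2_nil).
    destruct dir; subst l r; simpl; [apply HR; auto| apply rst_sym, HR; auto].
Qed.

Fixpoint grun R E w (sts : list gstep) : option (list gop) :=
  match sts with [] => Some w | st :: sts' => match apply_g R E w st with Some w1 => grun R E w1 sts' | None => None end end.

Lemma grun_sound R E sts : Rsound R -> Esound E -> forall w w', grun R E w sts = Some w' ->
  five_equiv (act w []) (act w' []).
Proof. intros HR HE; induction sts as [|st sts IH]; simpl; intros w w' H.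
  - inversion H; subst; apply rst_refl.
  - destruct (apply_g R E w st) eqn:E1; [|discriminate].
    eapply rst_trans; [eapply apply_g_sound; eauto | apply IH; auto]. Qed.

Fixpoint check_facts R E (fs : list (list gop * list gop * list gstep)) : bool :=
  match fs with
  | [] => true
  | (s, t, d) :: fs' => match grun R E s d with
                        | Some w => andb (gw_eqb w t) (check_facts R (E ++ [(s, t)]) fs')
                        | None => false end
  end.

Lemma check_facts_sound R fs : forall E, Rsound R -> Esound E -> check_facts R E fs = true ->
  Esound (E ++ map (fun '(s, t, _) => (s, t)) fs).
Proof.
  induction fs as [|[[s t] d] fs IH]; intros E HR HE C; simpl in *.
  - rewrite app_nil_r; auto.
  - destruct (grun R E s d) as [w|] eqn:G1; [|discriminate].
    apply andb_prop in C as [C1 C2]. apply gw_eqb_eq in C1; subst w.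
    assert (HE' : Esound (E ++ [(s, t)])).
    { intros s' t' Hin. apply in_app_or in Hin as [Hin|Hin]; [apply HE; auto|].
      destruct Hin as [Hin|[]]. inversion Hin; subst. eapply grun_sound; eauto. }
    specialize (IH _ HR HE' C2). rewrite <- app_assoc in IH. exact IH.
Qed.

Fixpoint gl_eqb (u v : list gen) : bool :=
  match u, v with [], [] => true | a :: u', b :: v' => gen_eqb a b && gl_eqb u' v' | _, _ => false end.
Lemma gl_eqb_eq u v : gl_eqb u v = true -> u = v.
Proof. revert v; induction u as [|a u IH]; intros [|b v]; simpl; try discriminate; auto.
  intros E; apply andb_prop in E as [E1 E2]. f_equal; auto. apply gen_eqb_eq; auto. Qed.

Definition check_rel (c : list gop * list gop * list step) : bool :=
  let '(a, b, sts) := c in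
  match run 4 (tail a) sts with Some w => gl_eqb w (tail b) | None => false end.

Lemma check_rels_sound cs : forallb check_rel cs = true -> Rsound (map (fun '(a, b, _) => (a, b)) cs).
Proof. intros C s t Hin. apply in_map_iff in Hin as [[[a b] sts] [E Hin]]. inversion E; subst.
  rewrite forallb_forall in C. specialize (C _ Hin). simpl in C.
  destruct (run 4 (tail s) sts) eqn:R1; [|discriminate]. apply gl_eqb_eq in C; subst.
  eapply gen_rel; eauto. Qed.

Definition Rcerts : list (list gop * list gop * list step) := [
  ([Oh; OH], [], [(1, RZl 2, true); (3, RScap true 1, true); (2, RFar KCap (KCrs false) 1 0, true); (0, RScup true 2, false); (1, RR2 true 3, true); (0, RZl 1, true)]);
  ([OH; Oh], [], [(1, RZl 2, true); (3, RScap false 1, true); (2, RFar KCap (KCrs true) 1 0, true); (0, RScup false 2, false); (1, RR2 false 3, true); (0, RZl 1, true)]);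
  ([Ov; OV], [], [(1, RR2 false 0, true)]);
  ([OV; Ov], [], [(1, RR2 true 0, true)]);
  ([Oh; Oh; Oh; Oh; Oh], [], [(6, RZl 1, false); (7, RFar KCap (KCrs true) 1 1, true); (8, RFar KCap KCap 1 0, true); (9, RFar KCap (KCrs true) 1 1, true); (10, RFar KCap KCap 1 0, true); (11, RFar KCap (KCrs true) 1 1, true); (12, RFar KCap KCap 1 0, true); (13, RFar KCap (KCrs true) 1 1, true); (14, RFar KCap KCap 1 0, true); (15, RFar KCap (KCrs true) 1 1, true); (16, RFar KCap KCap 1 0, true); (0, RFive 2, false); (1, RZl 1, true)]);
  ([Oh; OV; Oh], [OV; Oh; OV], [(1, RZl 2, true); (0, RScup false 2, false); (1, RFar KCap (KCrs false) 1 0, false); (0, RZl 1, true); (2, RScap true 1, true); (0, RR3 false 0, false); (2, RFar (KCrs false) KCap 0 0, true); (1, RScap true 1, false); (0, RZl 2, false)])].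
Definition F1c : list step := [(0, RScup true 1, true); (1, RR1cap false 1, true); (0, RZl 1, true)].
Definition F2c : list step := [(2, RScap true 1, true); (3, RR2 false 1, false); (4, RScap false 1, false); (0, RScup true 0, false); (1, RR2 true 1, true); (0, RScup false 0, true)].
Definition F3c : list step := [(0, RFar KCup KCap 0 0, false); (1, RR2 false 1, false); (2, RScap false 1, false); (0, RScup false 0, true)].
Definition facts : list (list gop * list gop * list gstep) := [
  ([Oh], [], [(0, 0, true, true)]);
  ([OH], [], [(0, 0, false, true); (0, 1, true, false)]);
  ([OV; Ov], [], [(0, 3, true, false)]);
  ([Oh; OV], [OH; Ov], [(0, 1, true, true)]);
  ([Ov; OV], [], [(0, 2, true, false)]);
  ([Oh; Oh; Ov], [OH; OV], [(2, 0, false, false); (0, 1, false, false); (0, 1, false, true); (1, 4, true, false)]);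
  ([OH; Oh; Ov], [Ov], [(0, 1, true, false)]);
  ([OV; Oh; Ov], [OH; OV], [(0, 1, false, false); (1, 5, true, false); (3, 3, true, false); (0, 0, true, true)]);
  ([Oh; OH; Ov], [Ov], [(0, 0, true, false)]);
  ([OH; OH; Ov], [OV], [(0, 1, false, true); (0, 1, true, false)]);
  ([Ov; OH; Ov], [OH; Ov], [(0, 1, false, true); (0, 0, false, true); (1, 5, true, false); (0, 2, true, false); (0, 1, true, true)]);
  ([OV; OH; Ov], [OH; Ov], [(0, 12, false, true); (0, 3, true, false)]);
  ([Oh; Ov; Ov], [Ov; Oh; Ov], [(0, 2, false, false); (1, 1, false, false); (2, 5, true, false); (4, 3, true, false); (0, 9, true, true); (0, 7, false, true); (1, 1, true, false)]);
  ([OH; Ov; Ov], [OV; OV], [(2, 0, false, false); (0, 13, false, true); (0, 1, false, true); (2, 5, true, false); (1, 2, true, false); (0, 1, true, false)]);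
  ([Ov; Ov; Ov], [OV; OV], [(1, 0, false, false); (0, 15, true, true); (3, 0, false, false); (1, 5, true, false); (0, 2, true, false); (0, 7, false, true); (0, 5, true, false); (0, 9, true, true); (1, 0, true, false)]);
  ([OV; Ov; Ov], [Ov], [(0, 3, true, false)]);
  ([Oh; OH; OV], [OV], [(0, 0, true, false)]);
  ([OH; OH; OV], [Oh; Ov], [(0, 7, false, true); (0, 1, true, false)]);
  ([Ov; OH; OV], [Oh; Ov], [(0, 9, false, true); (0, 2, true, false)]);
  ([Oh; OV; OV], [Ov; Ov], [(0, 15, false, true); (0, 0, true, false)]);
  ([OH; OV; OV], [OV; OH; OV], [(2, 0, false, false); (0, 9, false, true); (1, 5, false, false); (0, 1, true, false); (0, 7, true, true)]);
  ([Ov; OV; OV], [OV], [(0, 2, true, false)]);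
  ([OV; OV; OV], [Ov; Ov], [(0, 16, false, true); (0, 3, true, false)]);
  ([OH; Ov; Oh; Ov], [Ov; Ov], [(0, 14, false, true); (0, 1, true, false)]);
  ([OV; Ov; Oh; Ov], [Oh; Ov], [(0, 3, true, false)]);
  ([Oh; OV; OH; OV], [OV; OV], [(0, 22, false, true); (0, 0, true, false)]);
  ([OH; OV; OH; OV], [Oh; Ov; Oh; Ov], [(0, 4, false, false); (4, 0, true, false); (0, 27, true, true); (0, 21, true, true); (0, 14, true, true)]);
  ([Ov; OV; OH; OV], [OH; OV], [(0, 2, true, false)]);
  ([OV; OV; OH; OV], [Ov; Ov; Oh; Ov], [(0, 2, false, false); (0, 7, false, true); (5, 3, false, false); (3, 5, false, false); (2, 5, false, false); (1, 5, false, false); (0, 28, false, true); (4, 0, true, false); (0, 27, true, true); (0, 24, true, true); (0, 14, true, true)]);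
  ([Oh; Oh; Ov; Oh; Ov], [OV; OH; OV], [(0, 28, false, true); (0, 0, true, false)]);
  ([OH; Oh; Ov; Oh; Ov], [Ov; Oh; Ov], [(0, 1, true, false)]);
  ([Ov; Oh; Ov; Oh; Ov], [Oh; Ov; Oh; Ov], [(0, 28, false, true); (0, 7, false, true); (4, 3, false, false); (2, 5, false, false); (1, 1, true, false); (0, 2, true, false)]);
  ([OV; Oh; Ov; Oh; Ov], [Oh; Ov; Oh; Ov], [(0, 33, false, true); (0, 3, true, false)]);
  ([Oh; Ov; Ov; Oh; Ov], [Ov; Ov; Oh; Ov], [(0, 2, false, false); (1, 1, false, false); (2, 5, true, false); (4, 3, true, false); (0, 34, true, true); (1, 1, true, false)]);
  ([OH; Ov; Ov; Oh; Ov], [Ov; Ov; Oh; Ov], [(0, 35, false, true); (0, 1, true, false)]);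
  ([Ov; Ov; Ov; Oh; Ov], [OV; OH; OV], [(0, 30, false, true); (0, 2, true, false)]);
  ([OV; Ov; Ov; Oh; Ov], [Ov; Oh; Ov], [(0, 3, true, false)])].
Definition reptab : list ((Z * Z) * list gop) := Eval compute in map (fun x => ((Z.of_nat (fst (fst x)), Z.of_nat (snd (fst x))), snd x)) [
  ((1, 0), []);
  ((1, 1), [Ov]);
  ((1, 4), [OV]);
  ((2, 1), [Oh; Ov]);
  ((0, 1), [OH; Ov]);
  ((1, 2), [Ov; Ov]);
  ((2, 4), [OH; OV]);
  ((1, 3), [OV; OV]);
  ((2, 3), [Ov; Oh; Ov]);
  ((2, 2), [OV; OH; OV]);
  ((0, 2), [Oh; Ov; Oh; Ov]);
  ((2, 0), [Ov; Ov; Oh; Ov])].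

Definition R : list (list gop * list gop) := map (fun '(a, b, _) => (a, b)) Rcerts.
Lemma R_sound : Rsound R.
Proof. apply check_rels_sound. vm_compute. reflexivity. Qed.

Definition E0 : list (list gop * list gop) := [([Oh], []); ([Oh; OV], [OH; Ov])].
Lemma E0_sound : Esound E0.
Proof. intros s t [H|[H|[]]]; inversion H; subst; simpl; unfold hsum, vprod; simpl.
  - apply (run_sound0 F1c). vm_compute. reflexivity.
  - apply (run_sound0 F2c). vm_compute. reflexivity.
Qed.

Lemma facts_sound : Esound (E0 ++ map (fun '(s, t, _) => (s, t)) facts).
Proof. apply (check_facts_sound R); [apply R_sound|apply E0_sound|]. vm_compute. reflexivity. Qed.

Lemma zero_rep : five_equiv zero_tangle (act [OH; Ov] []).
Proof. simpl; unfold hsum, vprod; simpl. apply (run_sound0 F3c). vm_compute. reflexivity. Qed.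

Open Scope Z_scope.

Ltac mf x := let H1 := fresh in let H2 := fresh in
  pose proof (Z.div_mod x 5 ltac:(lia)) as H1; pose proof (Z.mod_pos_bound x 5 ltac:(lia)) as H2;
  set (x mod 5) in *; set (x / 5) in *.

Definition normr (a b : Z) : Z * Z :=
  let a' := (5 - a) mod 5 in let b' := (5 - b) mod 5 in
  if orb (a' <? a) (andb (a' =? a) (b' <? b)) then (a', b') else (a, b).
Definition cls (p q : Z) : Z * Z := normr (p mod 5) (q mod 5).
Definition rep (c : Z * Z) : list gop :=
  match find (fun e => andb (Z.eqb (fst (fst e)) (fst c)) (Z.eqb (snd (fst e)) (snd c))) reptab with
  | Some e => snd e | None => [] end.
Definition nxt (x : gop) (c : Z * Z) : Z * Z :=
  match x with
  | Oh => normr ((fst c + snd c) mod 5) (snd c)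
  | OH => normr ((fst c - snd c) mod 5) (snd c)
  | Ov => normr (fst c) ((snd c + fst c) mod 5)
  | OV => normr (fst c) ((snd c - fst c) mod 5)
  end.

Lemma res5 a : 0 <= a < 5 -> a = 0 \/ a = 1 \/ a = 2 \/ a = 3 \/ a = 4.
Proof. lia. Qed.

Ltac cases5 a := let H := fresh in assert (H : 0 <= a < 5) by (apply Z.mod_pos_bound; lia);
  apply res5 in H; destruct H as [H|[H|[H|[H|H]]]]; rewrite H in *.

Lemma cls_h p q : cls (p + q) q = nxt Oh (cls p q).
Proof. unfold cls. rewrite Z.add_mod by lia. cases5 (p mod 5); cases5 (q mod 5); vm_compute; reflexivity. Qed.
Lemma cls_H p q : cls (p - q) q = nxt OH (cls p q).
Proof. unfold cls. rewrite Zminus_mod. cases5 (p mod 5); cases5 (q mod 5); vm_compute; reflexivity. Qed.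
Lemma cls_v p q : cls p (q + p) = nxt Ov (cls p q).
Proof. unfold cls. rewrite (Z.add_mod q) by lia. cases5 (p mod 5); cases5 (q mod 5); vm_compute; reflexivity. Qed.
Lemma cls_V p q : cls p (q - p) = nxt OV (cls p q).
Proof. unfold cls. rewrite (Zminus_mod q). cases5 (p mod 5); cases5 (q mod 5); vm_compute; reflexivity. Qed.

Definition fact_ok (x : gop) (c : Z * Z) : bool :=
  orb (gw_eqb (x :: rep c) (rep (nxt x c)))
      (existsb (fun f => andb (gw_eqb (fst f) (x :: rep c)) (gw_eqb (snd f) (rep (nxt x c))))
               (E0 ++ map (fun '(s, t, _) => (s, t)) facts)).

Lemma fact_ok_sound x c : fact_ok x c = true -> five_equiv (act (x :: rep c) []) (act (rep (nxt x c)) []).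
Proof. unfold fact_ok. intros H. apply orb_prop in H as [H|H].
  - apply gw_eqb_eq in H. rewrite H. apply rst_refl.
  - apply existsb_exists in H as [[s t] [Hin H]]. apply andb_prop in H as [H1 H2]; cbn [fst snd] in H1, H2.
    apply gw_eqb_eq in H1; apply gw_eqb_eq in H2; subst. exact (facts_sound _ _ Hin). Qed.

Lemma fact_cls x p q : ~ (p mod 5 = 0 /\ q mod 5 = 0) ->
  five_equiv (act (x :: rep (cls p q)) []) (act (rep (nxt x (cls p q))) []).
Proof. intros Hn. apply fact_ok_sound. unfold cls.
  cases5 (p mod 5); cases5 (q mod 5); try (exfalso; apply Hn; split; reflexivity);
  destruct x; vm_compute; reflexivity. Qed.

Lemma rat_rep T p q : rational T p q ->
  ~ (p mod 5 = 0 /\ q mod 5 = 0) /\ five_equiv T (act (rep (cls p q)) []).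
Proof.
  induction 1 as [| |T p q H [Hn IH]|T p q H [Hn IH]|T p q H [Hn IH]|T p q H [Hn IH]].
  - split; [vm_compute; intros [? ?]; discriminate|]. exact zero_rep.
  - split; [vm_compute; intros [? ?]; discriminate|]. apply rst_refl.
  - split. { intros [H1 H2]. apply Hn. mf (p + q). mf q. mf p. lia. }
    rewrite cls_h. eapply rst_trans; [apply (op_cong Oh); exact IH|]. exact (fact_cls Oh p q Hn).
  - split. { intros [H1 H2]. apply Hn. mf (p - q). mf q. mf p. lia. }
    rewrite cls_H. eapply rst_trans; [apply (op_cong OH); exact IH|]. exact (fact_cls OH p q Hn).
  - split. { intros [H1 H2]. apply Hn. mf (q + p). mf q. mf p. lia. }
    rewrite cls_v. eapply rst_trans; [apply (op_cong Ov); exact IH|]. exact (fact_cls Ov p q Hn).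
  - split. { intros [H1 H2]. apply Hn. mf (q - p). mf q. mf p. lia. }
    rewrite cls_V. eapply rst_trans; [apply (op_cong OV); exact IH|]. exact (fact_cls OV p q Hn).
Qed.

Open Scope Z_scope.

Definition sumZ {A} (f : A -> Z) (l : list A) : Z := fold_right (fun a acc => f a + acc) 0 l.
Lemma sumZ_ext {A} (f g : A -> Z) l : (forall a, In a l -> f a = g a) -> sumZ f l = sumZ g l.
Proof. induction l as [|y l IH]; simpl; intros H; [ring|]. rewrite H, IH; auto. Qed.
Lemma sumZ_app {A} (f : A -> Z) l1 l2 : sumZ f (l1 ++ l2) = sumZ f l1 + sumZ f l2.
Proof. induction l1 as [|y l1 IH]; simpl; [ring|rewrite IH; ring]. Qed.
Lemma sumZ_map {A B} (f : B -> Z) (h : A -> B) l : sumZ f (map h l) = sumZ (fun a => f (h a)) l.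
Proof. induction l as [|y l IH]; simpl; [ring|rewrite IH; ring]. Qed.
Lemma sumZ_lin {A} a (f g : A -> Z) l : sumZ (fun x => a * f x + g x) l = a * sumZ f l + sumZ g l.
Proof. induction l as [|y l IH]; simpl; [ring|rewrite IH; ring]. Qed.
Lemma sumZ_zero {A} (l : list A) : sumZ (fun _ => 0) l = 0.
Proof. induction l as [|y l IH]; simpl; [ring|rewrite IH; ring]. Qed.
Lemma sumZ_div {A} (f : A -> Z) l : (forall a, In a l -> (41 | f a)) -> (41 | sumZ f l).
Proof. induction l as [|y l IH]; simpl; intros H. apply Z.divide_0_r. apply Z.divide_add_r; auto. Qed.
Lemma sumZ_swap {A B} (f : A -> B -> Z) la lb :
  sumZ (fun a => sumZ (fun b => f a b) lb) la = sumZ (fun b => sumZ (fun a => f a b) la) lb.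
Proof. induction la; simpl. { rewrite sumZ_zero; auto. }
  rewrite IHla. clear IHla. induction lb; simpl; auto. rewrite <- IHlb. ring. Qed.

Fixpoint alls (n : nat) : list (list bool) :=
  match n with O => [[]] | S n' => map (cons false) (alls n') ++ map (cons true) (alls n') end.
Lemma alls_len n u : In u (alls n) -> length u = n.
Proof. revert u; induction n; simpl; intros u H. { destruct H as [<-|[]]; auto. }
  apply in_app_or in H as [H|H]; apply in_map_iff in H as [u' [<- H]]; simpl; f_equal; auto. Qed.

Fixpoint lbeq (x y : list bool) : bool :=
  match x, y with [], [] => true | a :: x', b :: y' => Bool.eqb a b && lbeq x' y' | _, _ => false end.
Lemma lbeq_spec x y : lbeq x y = true <-> x = y.
Proof. revert y; induction x as [|a x IH]; intros [|b y]; simpl; split; intros H; try discriminate; auto.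
  - apply andb_prop in H as [H1 H2]. apply Bool.eqb_prop in H1. apply IH in H2. subst; auto.
  - inversion H; subst. rewrite Bool.eqb_reflx. simpl. apply IH; auto. Qed.
Definition delta (x : list bool) : list bool -> Z := fun y => if lbeq x y then 1 else 0.

Lemma basis n (G : list bool -> Z) x' : length x' = n ->
  sumZ (fun x => G x * delta x x') (alls n) = G x'.
Proof. revert G x'; induction n; intros G x' Hl; simpl.
  - destruct x'; [|discriminate]. unfold delta; simpl. ring.
  - destruct x' as [|b x']; [discriminate|]. simpl in Hl. injection Hl as Hl.
    rewrite sumZ_app, !sumZ_map. unfold delta; simpl.
    pose proof (IHn (fun x => G (true :: x)) x' Hl) as E1. pose proof (IHn (fun x => G (false :: x)) x' Hl) as E2.
    unfold delta in E1, E2. simpl in E1, E2.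
    destruct b; simpl.
    + rewrite (sumZ_ext _ (fun _ => 0)) by (intros; ring). rewrite sumZ_zero, E1. ring.
    + rewrite (sumZ_ext (fun a => G (true :: a) * 0) (fun _ => 0)) by (intros; ring). rewrite sumZ_zero, E2. ring.
Qed.

Fixpoint splitn (n : nat) (l : list bool) : option (list bool * list bool) :=
  match n with
  | O => Some ([], l)
  | S n' => match l with [] => None | b :: l' =>
      match splitn n' l' with Some (y, z) => Some (b :: y, z) | None => None end end
  end.
Lemma splitn_app y x : splitn (length y) (y ++ x) = Some (y, x).
Proof. induction y; simpl; auto. rewrite IHy; auto. Qed.
Lemma splitn_some n l y z : splitn n l = Some (y, z) -> l = y ++ z /\ length y = n.
Proof. revert l y z; induction n; intros l y z H; simpl in H. { inversion H; auto. }
  destruct l as [|b l]; [discriminate|]. destruct (splitn n l) as [[y' z']|] eqn:E; [|discriminate].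
  inversion H; subst. apply IHn in E as [-> <-]. auto. Qed.
Lemma splitn_none n l : splitn n l = None -> (length l < n)%nat.
Proof. revert l; induction n; intros l H; simpl in H. discriminate.
  destruct l as [|b l]; simpl; [lia|]. destruct (splitn n l) as [[y' z']|] eqn:E; [discriminate|].
  apply IHn in E; lia. Qed.

Definition cupk (y : list bool) : Z := match y with [false; true] => 5 | [true; false] => 1 | _ => 0 end.
Definition capk (u : list bool) : Z := match u with [false; true] => 1 | [true; false] => 33 | _ => 0 end.
Definition crk (s : bool) (y u : list bool) : Z :=
  (if s then 6 else 7) * (if lbeq y u then 1 else 0) + (if s then 7 else 6) * cupk y * capk u.
Definition Kk (k : kind) (y u : list bool) : Z :=
  match k with KCup => cupk y | KCap => capk u | KCrs s => crk s y u end.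

Definition opk (k : kind) (F : list bool -> Z) (l : list bool) : Z :=
  match splitn (dout k) l with
  | Some (y, l') => sumZ (fun u => Kk k y u * F (u ++ l')) (alls (din k))
  | None => 0 end.

Fixpoint atp (i : nat) (Phi : (list bool -> Z) -> list bool -> Z) (F : list bool -> Z) (l : list bool) : Z :=
  match i with
  | O => Phi F l
  | S i' => match l with [] => 0 | b :: l' => atp i' Phi (fun x => F (b :: x)) l' end
  end.

Definition Act (g : gen) (F : list bool -> Z) : list bool -> Z :=
  match g with G k i => atp i (opk k) F end.
Fixpoint sem (w : list gen) (F : list bool -> Z) : list bool -> Z :=
  match w with [] => F | g :: w' => sem w' (Act g F) end.

Lemma sem_app u v F : sem (u ++ v) F = sem v (sem u F).
Proof. revert F; induction u; simpl; auto. Qed.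

Definition Lin (Psi : (list bool -> Z) -> list bool -> Z) : Prop :=
  (forall G G' l, (forall x, G x = G' x) -> Psi G l = Psi G' l) /\
  (forall a G G' l, Psi (fun x => a * G x + G' x) l = a * Psi G l + Psi G' l).

Lemma Lin_zero Psi : Lin Psi -> forall l, Psi (fun _ => 0) l = 0.
Proof. intros [He Hl] l. pose proof (Hl 1 (fun _ => 0) (fun _ => 0) l) as H.
  rewrite (He (fun x => 1 * 0 + 0) (fun _ => 0)) in H by (intros; ring). lia. Qed.

Lemma Lin_sum Psi {A} (c : A -> Z) (D : A -> list bool -> Z) js l : Lin Psi ->
  Psi (fun x => sumZ (fun j => c j * D j x) js) l = sumZ (fun j => c j * Psi (D j) l) js.
Proof. intros HL. induction js as [|j js IH]; simpl.
  - apply Lin_zero; auto.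
  - destruct HL as [He Hl]. rewrite <- IH. apply Hl. Qed.

Lemma Lin_opk k : Lin (opk k).
Proof. split.
  - intros G G' l H. unfold opk. destruct (splitn (dout k) l) as [[y l']|]; auto.
    apply sumZ_ext; intros; rewrite H; auto.
  - intros a G G' l. unfold opk. destruct (splitn (dout k) l) as [[y l']|]; [|ring].
    rewrite <- sumZ_lin. apply sumZ_ext; intros; ring. Qed.

Lemma Lin_atp i Phi : Lin Phi -> Lin (atp i Phi).
Proof. intros HL; induction i; simpl; auto. split.
  - intros G G' [|b l] H; auto. apply IHi. intros; apply H.
  - intros a G G' [|b l]; [ring|]. apply IHi. Qed.

Lemma Lin_Act g : Lin (Act g).
Proof. destruct g; simpl. apply Lin_atp, Lin_opk. Qed.

Lemma Lin_sem w : Lin (sem w).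
Proof. induction w as [|g w IH]; simpl.
  - split; auto.
  - destruct IH as [He Hl]. destruct (Lin_Act g) as [He' Hl']. split.
    + intros G G' l H. apply He. intros; apply He'; auto.
    + intros a G G' l. rewrite <- Hl. apply He. intros; apply Hl'. Qed.

Lemma sem_ext w G G' l : (forall x, G x = G' x) -> sem w G l = sem w G' l.
Proof. apply Lin_sem. Qed.

Lemma sem_cong w c G G' : (forall x, (41 | G x - c * G' x)) -> forall l, (41 | sem w G l - c * sem w G' l).
Proof. intros H l. destruct (Lin_sem w) as [He Hl].
  assert (E : sem w G l - c * sem w G' l = sem w (fun x => (-c) * G' x + G x) l).
  { rewrite Hl. ring. }
  rewrite E. assert (H' : forall x, exists q, - c * G' x + G x = 41 * q).
  { intros x. destruct (H x) as [q Hq]. exists q. lia. }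
  set (Q := fun x => (- c * G' x + G x) / 41).
  rewrite (He _ (fun x => 41 * Q x + 0)).
  - rewrite Hl. rewrite Lin_zero by apply Lin_sem. exists (sem w Q l). ring.
  - intros x. destruct (H' x) as [q Hq]. unfold Q. rewrite Hq. rewrite Z.mul_comm, Z.div_mul by lia. ring.
Qed.

Lemma atp_peel p d Phi F l : atp (length p + d) Phi F (p ++ l) = atp d Phi (fun x => F (p ++ x)) l.
Proof. revert F; induction p as [|b p IH]; intros F; simpl; auto. Qed.

Lemma atp_short n d Phi F l : (length l < n)%nat -> atp (n + d) Phi F l = 0.
Proof. revert F l; induction n; intros F l H; simpl in *. lia.
  destruct l as [|b l]; auto. simpl in H. apply IHn. lia. Qed.

Lemma atp_add j i Phi F l : atp (j + i) Phi F l = atp i (atp j Phi) F l.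
Proof. revert F l; induction i; intros F l.
  - rewrite Nat.add_0_r. reflexivity.
  - rewrite Nat.add_succ_r. simpl. destruct l; auto. Qed.

Lemma atp_ext i Phi F F' l : Lin Phi -> (forall x, F x = F' x) -> atp i Phi F l = atp i Phi F' l.
Proof. intros HL H. apply (Lin_atp i Phi HL); auto. Qed.

Lemma opk_app k y x G : length y = dout k ->
  opk k G (y ++ x) = sumZ (fun u => Kk k y u * G (u ++ x)) (alls (din k)).
Proof. intros Hy. unfold opk. rewrite <- Hy, splitn_app. reflexivity. Qed.

Lemma far_comm a b d : forall i F l,
  atp (i + dout a + d) (opk b) (atp i (opk a) F) l = atp i (opk a) (atp (i + din a + d) (opk b) F) l.
Proof.
  induction i; intros F l.
  - simpl. destruct (splitn (dout a) l) as [[y l']|] eqn:E.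
    + apply splitn_some in E as [-> Hy].
      rewrite (opk_app a y l') by auto.
      rewrite <- Hy. rewrite atp_peel.
      rewrite (atp_ext d (opk b) _ (fun x => sumZ (fun u => Kk a y u * F (u ++ x)) (alls (din a)))).
      2: apply Lin_opk.
      2: { intros x. apply opk_app; auto. }
      rewrite (Lin_sum (atp d (opk b)) (fun u => Kk a y u) (fun u x => F (u ++ x))) by (apply Lin_atp, Lin_opk).
      apply sumZ_ext. intros u Hu. f_equal. apply alls_len in Hu. rewrite <- Hu. rewrite atp_peel. reflexivity.
    + pose proof E as E3. apply splitn_none in E3. rewrite atp_short by auto. unfold opk at 1. rewrite E. reflexivity.
  - destruct l as [|c l]; simpl; auto.
Qed.

Definition supp (n : nat) (F : list bool -> Z) : Prop := forall x, length x <> n -> F x = 0.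

Lemma opk_supp k n F : supp n F -> (din k <= n)%nat -> supp (n - din k + dout k) (opk k F).
Proof. intros HF Hd l Hl. unfold opk. destruct (splitn (dout k) l) as [[y l']|] eqn:E; auto.
  apply splitn_some in E as [-> Hy]. rewrite length_app in Hl.
  rewrite (sumZ_ext _ (fun _ => 0)); [apply sumZ_zero|].
  intros u Hu. apply alls_len in Hu. rewrite HF; [ring|]. rewrite length_app. lia. Qed.

Lemma atp_supp i k : forall n F, supp n F -> (i + din k <= n)%nat -> supp (n - din k + dout k) (atp i (opk k) F).
Proof. induction i; intros n F HF Hn; simpl. apply opk_supp; auto; lia.
  intros [|b l] Hl; auto. simpl in Hl.
  assert (H1 : supp (n - 1)%nat (fun x => F (b :: x))). { intros x Hx. apply HF. simpl. lia. }
  apply (IHi (n - 1)%nat _ H1); lia. Qed.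

Lemma sem_supp w : forall n m F, supp n F -> arity n w = Some m -> supp m (sem w F).
Proof. induction w as [|[k i] w IH]; intros n m F HF Hw; simpl in *. { inversion Hw; subst; auto. }
  destruct (Nat.leb_spec (i + din k) n); [|discriminate].
  eapply IH; [|exact Hw]. apply atp_supp; auto. Qed.

Lemma opk_LD k n F F' : (forall x, length x = n -> F x = F' x) -> (din k <= n)%nat ->
  forall l, length l = (n - din k + dout k)%nat -> opk k F l = opk k F' l.
Proof. intros HF Hd l Hl. unfold opk. destruct (splitn (dout k) l) as [[y l']|] eqn:E; auto.
  apply splitn_some in E as [-> Hy]. rewrite length_app in Hl.
  apply sumZ_ext. intros u Hu. apply alls_len in Hu. rewrite HF; auto. rewrite length_app. lia. Qed.

Lemma atp_LD i k : forall n F F', (forall x, length x = n -> F x = F' x) -> (i + din k <= n)%nat ->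
  forall l, length l = (n - din k + dout k)%nat -> atp i (opk k) F l = atp i (opk k) F' l.
Proof. induction i; intros n F F' HF Hn l Hl; simpl. eapply opk_LD; eauto; lia.
  destruct l as [|b l]; auto. simpl in Hl.
  apply (IHi (n - 1)%nat); [|lia|lia]. intros x Hx. apply HF. simpl. lia. Qed.

Lemma sem_LD w : forall n m F F', (forall x, length x = n -> F x = F' x) -> arity n w = Some m ->
  forall l, length l = m -> sem w F l = sem w F' l.
Proof. induction w as [|[k i] w IH]; intros n m F F' HF Hw l Hl; simpl in *.
  { inversion Hw; subst; auto. }
  destruct (Nat.leb_spec (i + din k) n); [|discriminate].
  eapply IH; [|exact Hw|exact Hl]. intros x Hx. eapply atp_LD; eauto. Qed.

Lemma opk_RC k G y z : (dout k <= length y)%nat -> opk k G (y ++ z) = opk k (fun x => G (x ++ z)) y.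
Proof. intros H. destruct (splitn (dout k) y) as [[y1 y2]|] eqn:E.
  - apply splitn_some in E as [-> Hy]. rewrite <- app_assoc, !opk_app by auto.
    apply sumZ_ext; intros; rewrite app_assoc; auto.
  - apply splitn_none in E. lia. Qed.

Lemma atp_RC i k : forall G y z, (i + dout k <= length y)%nat ->
  atp i (opk k) G (y ++ z) = atp i (opk k) (fun x => G (x ++ z)) y.
Proof. induction i; intros G y z H; simpl. apply opk_RC; auto.
  destruct y as [|b y]; simpl in *; [lia|]. apply (IHi (fun x => G (b :: x))). lia. Qed.

Lemma sem_RC w : forall n m G y z, arity n w = Some m -> length y = m ->
  sem w G (y ++ z) = sem w (fun x => G (x ++ z)) y.
Proof. induction w as [|[k i] w IH]; intros n m G y z Hw Hy; simpl in *.
  { reflexivity. }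
  destruct (Nat.leb_spec (i + din k) n); [|discriminate].
  rewrite (IH _ _ _ _ _ Hw Hy). eapply sem_LD; [|exact Hw|exact Hy].
  intros x Hx. simpl. apply atp_RC. lia. Qed.

Lemma kernel w n m G y z : arity n w = Some m -> length y = m ->
  sem w G (y ++ z) = sumZ (fun x => sem w (delta x) y * G (x ++ z)) (alls n).
Proof. intros Hw Hy. rewrite (sem_RC w n m G y z Hw Hy).
  rewrite (sem_LD w n m _ (fun x' => sumZ (fun x => G (x ++ z) * delta x x') (alls n))); auto.
  - rewrite (Lin_sum (sem w) (fun x => G (x ++ z)) delta) by apply Lin_sem.
    apply sumZ_ext; intros; ring.
  - intros x Hx. rewrite (basis n (fun x => G (x ++ z)) x Hx). reflexivity. Qed.

Lemma atp_comp i Psi Phi : forall F l, atp i Psi (atp i Phi F) l = atp i (fun G => Psi (Phi G)) F l.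
Proof. induction i; intros F l; simpl; auto. destruct l; auto. Qed.

Lemma atp_id i : forall F l, (i <= length l)%nat -> atp i (fun G => G) F l = F l.
Proof. induction i; intros F l H; simpl; auto. destruct l as [|b l]; simpl in H; [lia|].
  rewrite IHi by lia. reflexivity. Qed.

Lemma sem_shift i u : forall F l, (i <= length l)%nat -> sem (Defs.shift i u) F l = atp i (sem u) F l.
Proof. induction u as [|[k j] u IH]; intros F l Hl; simpl.
  - rewrite atp_id; auto.
  - rewrite IH by auto. rewrite (atp_ext i (sem u) _ (atp i (atp j (opk k)) F)).
    + apply atp_comp.
    + apply Lin_sem.
    + intros x. apply atp_add.
Qed.

Definition kcheck (u u' : list gen) (n m : nat) (c : Z) : bool :=
  forallb (fun y => forallb (fun x => Z.eqb ((sem u (delta x) y - c * sem u' (delta x) y) mod 41) 0) (alls n)) (alls m).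

Lemma window_local u u' n m c i : arity n u = Some m -> arity n u' = Some m -> kcheck u u' n m c = true ->
  forall F p y z, length p = i -> length y = m ->
  (41 | sem (Defs.shift i u) F (p ++ y ++ z) - c * sem (Defs.shift i u') F (p ++ y ++ z)).
Proof. intros Hu Hu' Hk F p y z Hp Hy.
  rewrite !sem_shift by (rewrite length_app; lia).
  rewrite <- Hp, <- (Nat.add_0_r (length p)), !atp_peel.
  simpl. rewrite (kernel u n m _ y z Hu Hy), (kernel u' n m _ y z Hu' Hy).
  assert (E : forall (f g : list bool -> Z), sumZ f (alls n) - c * sumZ g (alls n) = sumZ (fun x => f x - c * g x) (alls n)).
  { intros f g. induction (alls n); simpl; [ring|]. rewrite <- IHl. ring. }
  rewrite E. apply sumZ_div. intros x Hx.
  unfold kcheck in Hk. rewrite forallb_forall in Hk.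
  assert (Hyin : In y (alls m)).
  { clear -Hy. revert y Hy. induction m; intros [|b y] Hy; simpl in *; try discriminate; auto.
    injection Hy as Hy. apply in_or_app. destruct b; [right|left]; apply in_map; auto. }
  specialize (Hk y Hyin). rewrite forallb_forall in Hk. specialize (Hk x Hx).
  apply Z.eqb_eq in Hk. apply Z.mod_divide in Hk; [|lia].
  replace (sem u (delta x) y * (fun x0 => F (p ++ x0)) (x ++ z) - c * (sem u' (delta x) y * (fun x0 => F (p ++ x0)) (x ++ z)))
    with ((sem u (delta x) y - c * sem u' (delta x) y) * F (p ++ x ++ z)) by (simpl; ring).
  apply Z.divide_mul_l; auto.
Qed.


Inductive trie := Leaf (z : Z) | Node (t0 t1 : trie).
Fixpoint build (n : nat) (F : list bool -> Z) : trie :=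
  match n with O => Leaf (F []) | S n' => Node (build n' (fun x => F (false :: x))) (build n' (fun x => F (true :: x))) end.
Fixpoint lookup (t : trie) (x : list bool) : Z :=
  match t, x with
  | Leaf z, _ => z
  | Node t0 t1, b :: x' => lookup (if b then t1 else t0) x'
  | Node _ _, [] => 0 end.
Lemma lookup_build n F x : length x = n -> lookup (build n F) x = F x.
Proof. revert F x; induction n; intros F [|b x] H; simpl in *; try discriminate; auto.
  injection H as H. destruct b; rewrite IHn; auto. Qed.

Fixpoint fsem (w : list gen) (n : nat) (F : list bool -> Z) : trie :=
  match w with
  | [] => build n F
  | g :: w' => match gen_arity n g with
               | Some n' => let t := build n' (Act g F) in fsem w' n' (lookup t)
               | None => Leaf 0 end
  end.

Lemma fsem_ok w : forall n m F, arity n w = Some m -> forall y, length y = m -> lookup (fsem w n F) y = sem w F y.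
Proof. induction w as [|g w IH]; intros n m F Hw y Hy; simpl in *.
  - inversion Hw; subst. apply lookup_build; auto.
  - destruct (gen_arity n g) as [n'|] eqn:E; [|discriminate].
    rewrite (IH n' m _ Hw y Hy). eapply sem_LD; [|exact Hw|exact Hy].
    intros x Hx. apply lookup_build; auto. Qed.

Definition kcheckf (u u' : list gen) (n m : nat) (c : Z) : bool :=
  forallb (fun x => let t := fsem u n (delta x) in let t' := fsem u' n (delta x) in
     forallb (fun y => Z.eqb ((lookup t y - c * lookup t' y) mod 41) 0) (alls m)) (alls n).

Lemma kcheckf_ok u u' n m c : arity n u = Some m -> arity n u' = Some m -> kcheckf u u' n m c = true ->
  kcheck u u' n m c = true.
Proof. intros Hu Hu' H. unfold kcheck, kcheckf in *. rewrite forallb_forall in *. intros y Hy.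
  rewrite forallb_forall. intros x Hx. specialize (H x Hx). rewrite forallb_forall in H. specialize (H y Hy).
  apply alls_len in Hy. rewrite <- (fsem_ok u n m (delta x) Hu y Hy), <- (fsem_ok u' n m (delta x) Hu' y Hy). exact H. Qed.

Lemma win_case u u' n wout c i k m : arity n u = Some wout -> arity n u' = Some wout ->
  kcheckf u u' n wout c = true -> (i + wout <= m)%nat ->
  arity k (Defs.shift i u) = Some m -> arity k (Defs.shift i u') = Some m ->
  forall F, supp k F -> forall L, (41 | sem (Defs.shift i u) F L - c * sem (Defs.shift i u') F L).
Proof. intros Hu Hu' Hk0 Him Hl Hr F HF L. assert (Hk := kcheckf_ok _ _ _ _ _ Hu Hu' Hk0).
  destruct (Nat.eq_dec (length L) m) as [HL|HL].
  - rewrite <- (firstn_skipn i L). rewrite <- (firstn_skipn wout (skipn i L)).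
    apply (window_local u u' n wout c i Hu Hu' Hk).
    + rewrite length_firstn. lia.
    + rewrite length_firstn, length_skipn. lia.
  - rewrite (sem_supp _ k m F HF Hl L HL), (sem_supp _ k m F HF Hr L HL).
    exists 0. ring.
Qed.

Ltac arity_tac H := cbn [arity gen_arity din dout X Defs.shift map] in H;
  repeat match type of H with context [Nat.leb ?a ?b] => destruct (Nat.leb_spec a b) end;
  try discriminate; inversion H; lia.

Ltac wc u u' n w c i k m Hl := apply (win_case u u' n w c i k m); [reflexivity|reflexivity|vm_compute; reflexivity|arity_tac Hl|assumption|assumption|assumption].

Lemma move_local l r k m : (isotopy_move l r \/ five_move l r) -> arity k l = Some m -> arity k r = Some m ->
  exists c d, (41 | c * d - 1) /\ forall F, supp k F -> forall L, (41 | sem l F L - c * sem r F L).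
Proof.
  intros [H|[i [-> ->]]] Hl Hr.
  - destruct H.
    + exists 1, 1. split; [exists 0; ring|]. intros F HF L. cbn [sem Act]. rewrite far_comm. rewrite Z.mul_1_l, Z.sub_diag. apply Z.divide_0_r.
    + exists 1, 1. split; [exists 0; ring|]. intros F HF L. wc [G KCup 1; G KCap 0] (@nil gen) 1%nat 1%nat 1 i k m Hl.
    + exists 1, 1. split; [exists 0; ring|]. intros F HF L. wc [G KCup 0; G KCap 1] (@nil gen) 1%nat 1%nat 1 i k m Hl.
    + destruct s; [exists 26, 30|exists 30, 26]; (split; [exists 19; ring|]); intros F HF L.
      * wc [G KCup 0; X true 0] [G KCup 0] 0%nat 2%nat 26 i k m Hl.
      * wc [G KCup 0; X false 0] [G KCup 0] 0%nat 2%nat 30 i k m Hl.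
    + destruct s; [exists 26, 30|exists 30, 26]; (split; [exists 19; ring|]); intros F HF L.
      * wc [X true 0; G KCap 0] [G KCap 0] 2%nat 0%nat 26 i k m Hl.
      * wc [X false 0; G KCap 0] [G KCap 0] 2%nat 0%nat 30 i k m Hl.
    + exists 1, 1. split; [exists 0; ring|]. intros F HF L.
      destruct s; [wc [X true 0; X false 0] (@nil gen) 2%nat 2%nat 1 i k m Hl|wc [X false 0; X true 0] (@nil gen) 2%nat 2%nat 1 i k m Hl].
    + exists 1, 1. split; [exists 0; ring|]. intros F HF L.
      destruct s; [wc [X true 0; X true 1; X true 0] [X true 1; X true 0; X true 1] 3%nat 3%nat 1 i k m Hl
                  |wc [X false 0; X false 1; X false 0] [X false 1; X false 0; X false 1] 3%nat 3%nat 1 i k m Hl].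
    + exists 1, 1. split; [exists 0; ring|]. intros F HF L.
      destruct s; [wc [G KCup 0; X true 1] [G KCup 1; X false 0] 1%nat 3%nat 1 i k m Hl
                  |wc [G KCup 0; X false 1] [G KCup 1; X true 0] 1%nat 3%nat 1 i k m Hl].
    + exists 1, 1. split; [exists 0; ring|]. intros F HF L.
      destruct s; [wc [X true 1; G KCap 0] [X false 0; G KCap 1] 3%nat 1%nat 1 i k m Hl
                  |wc [X false 1; G KCap 0] [X true 0; G KCap 1] 3%nat 1%nat 1 i k m Hl].
  - exists 27, 38. split; [exists 25; ring|]. intros F HF L.
    unfold zero_tangle in *. wc [G KCap 0; G KCup 0] (htwist 5) 2%nat 2%nat 27 i k m Hl.
Qed.

Open Scope Z_scope.

Definition Pr (w w' : list gen) : Prop :=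
  exists c d, (41 | c * d - 1) /\ forall l0, length l0 = 2%nat -> forall L, (41 | sem w (delta l0) L - c * sem w' (delta l0) L).

Lemma delta_supp l0 : supp (length l0) (delta l0).
Proof. intros x Hx. unfold delta. destruct (lbeq l0 x) eqn:E; auto. apply lbeq_spec in E; subst; tauto. Qed.

Lemma five_equiv_Pr w w' : five_equiv w w' -> Pr w w'.
Proof.
  induction 1 as [x y H| x | x y H [c [d [Hcd Hc]]] | x y z H1 [c1 [d1 [Hcd1 Hc1]]] H2 [c2 [d2 [Hcd2 Hc2]]]].
  - assert (Hl : exists a l r b k m, x = a ++ l ++ b /\ y = a ++ r ++ b /\ arity 2 a = Some k /\
        arity k l = Some m /\ arity k r = Some m /\ (isotopy_move l r \/ five_move l r)).
    { destruct H as [H|H]; destruct H as (a & l & r & b & k & m & E1 & E2 & H1 & H2 & H3 & H4);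
      exists a, l, r, b, k, m; repeat split; auto. }
    destruct Hl as (a & l & r & b & k & m & -> & -> & Ha & Hl & Hr & Hmv).
    destruct (move_local l r k m Hmv Hl Hr) as [c [d [Hcd Hc]]].
    exists c, d; split; auto. intros l0 Hl0 L. rewrite !sem_app.
    apply sem_cong. apply Hc. apply (sem_supp a 2 k); [rewrite <- Hl0; apply delta_supp|exact Ha].
  - exists 1, 1; split; [exists 0; ring|]. intros; exists 0; ring.
  - exists d, c; split; [destruct Hcd as [q Hq]; exists q; lia|]. intros l0 Hl0 L.
    destruct (Hc l0 Hl0 L) as [q1 Hq1]. destruct Hcd as [q2 Hq2].
    exists (- d * q1 - q2 * sem y (delta l0) L).
    replace (sem y (delta l0) L - d * sem x (delta l0) L) with
      (- d * (sem x (delta l0) L - c * sem y (delta l0) L) - (c * d - 1) * sem y (delta l0) L) by ring.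
    rewrite Hq1, Hq2. ring.
  - exists (c1 * c2), (d2 * d1). split.
    + destruct Hcd1 as [q1 Hq1]; destruct Hcd2 as [q2 Hq2]. exists (c1 * q2 * d1 + q1).
      replace (c1 * c2 * (d2 * d1) - 1) with (c1 * (c2 * d2 - 1) * d1 + (c1 * d1 - 1)) by ring.
      rewrite Hq1, Hq2. ring.
    + intros l0 Hl0 L. destruct (Hc1 l0 Hl0 L) as [q1 Hq1]. destruct (Hc2 l0 Hl0 L) as [q2 Hq2].
      exists (q1 + c1 * q2).
      replace (sem x (delta l0) L - c1 * c2 * sem z (delta l0) L) with
        ((sem x (delta l0) L - c1 * sem y (delta l0) L) + c1 * (sem y (delta l0) L - c2 * sem z (delta l0) L)) by ring.
      rewrite Hq1, Hq2. ring.
Qed.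

Definition val (w : list gen) (l0 L : list bool) : Z := lookup (fsem w 2 (delta l0)) L.
Definition ipairs (w w' : list gen) : list (Z * Z) :=
  flat_map (fun l0 => map (fun L => (val w l0 L, val w' l0 L)) (alls 2)) (alls 2).
Definition rlist : list Z := map Z.of_nat (seq 0 41).
Definition notprop (ps : list (Z * Z)) : bool :=
  forallb (fun r => existsb (fun ab => negb (Z.eqb ((fst ab - r * snd ab) mod 41) 0)) ps) rlist.

Lemma notprop_ok w w' : tangle2 w -> tangle2 w' -> notprop (ipairs w w') = true -> ~ Pr w w'.
Proof.
  intros Hw Hw' Hn [c [d [Hcd Hc]]]. unfold notprop in Hn. rewrite forallb_forall in Hn.
  assert (Hr : In (c mod 41) rlist).
  { unfold rlist. apply in_map_iff. exists (Z.to_nat (c mod 41)). split.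
    - rewrite Z2Nat.id; auto. apply Z.mod_pos_bound; lia.
    - apply in_seq. pose proof (Z.mod_pos_bound c 41 ltac:(lia)). lia. }
  specialize (Hn _ Hr). apply existsb_exists in Hn as [[a b] [Hin Hab]].
  unfold ipairs in Hin. apply in_flat_map in Hin as [l0 [Hl0 Hin]]. apply in_map_iff in Hin as [L [E HL]].
  inversion E; subst a b; clear E. apply alls_len in Hl0. apply alls_len in HL.
  unfold val in Hab. rewrite (fsem_ok w 2 2 _ Hw L HL), (fsem_ok w' 2 2 _ Hw' L HL) in Hab.
  specialize (Hc l0 Hl0 L). simpl in Hab. apply negb_true_iff in Hab. apply Z.eqb_neq in Hab. apply Hab.
  apply Z.mod_divide; [lia|]. destruct Hc as [q Hq].
  rewrite (Z.div_mod c 41) in Hq by lia. exists (q + c / 41 * sem w' (delta l0) L).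
  replace (sem w (delta l0) L - c mod 41 * sem w' (delta l0) L) with
    ((sem w (delta l0) L - (41 * (c / 41) + c mod 41) * sem w' (delta l0) L) + 41 * (c / 41) * sem w' (delta l0) L) by ring.
  rewrite Hq. ring.
Qed.

Definition classes : list (Z * Z) := map fst reptab.
Definition pair_eqb (a b : Z * Z) : bool := andb (Z.eqb (fst a) (fst b)) (Z.eqb (snd a) (snd b)).

Definition distinct_check : bool :=
  forallb (fun c => forallb (fun c' => orb (pair_eqb c c') (notprop (ipairs (act (rep c) []) (act (rep c') [])))) classes) classes.

Lemma distinct_check_ok : distinct_check = true.
Proof. vm_compute. reflexivity. Qed.

Lemma rep_distinct c c' : In c classes -> In c' classes ->
  five_equiv (act (rep c) []) (act (rep c') []) -> c = c'.
Proof. intros Hc Hc' H. pose proof distinct_check_ok as D. unfold distinct_check in D.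
  rewrite forallb_forall in D. specialize (D c Hc). rewrite forallb_forall in D. specialize (D c' Hc').
  apply orb_prop in D as [D|D].
  - destruct c, c'; unfold pair_eqb in D; simpl in D. apply andb_prop in D as [D1 D2].
    apply Z.eqb_eq in D1; apply Z.eqb_eq in D2; subst; auto.
  - exfalso. eapply notprop_ok; [apply tangle2_act, tangle2_nil|apply tangle2_act, tangle2_nil|exact D|].
    apply five_equiv_Pr; auto.
Qed.

Open Scope Z_scope.

Ltac modfacts := repeat match goal with
  | H : context [?e mod 5] |- _ =>
    lazymatch goal with
    | _ : e = 5 * (e / 5) + e mod 5 |- _ => fail
    | _ => pose proof (Z.div_mod e 5 ltac:(lia)); pose proof (Z.mod_pos_bound e 5 ltac:(lia))
    end
  | |- context [?e mod 5] =>
    lazymatch goal with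
    | _ : e = 5 * (e / 5) + e mod 5 |- _ => fail
    | _ => pose proof (Z.div_mod e 5 ltac:(lia)); pose proof (Z.mod_pos_bound e 5 ltac:(lia))
    end
  end.

Lemma cls_in p q : ~ (p mod 5 = 0 /\ q mod 5 = 0) -> In (cls p q) classes.
Proof. intros Hn. unfold cls. cases5 (p mod 5); cases5 (q mod 5);
  try (exfalso; apply Hn; split; reflexivity); vm_compute; auto 20. Qed.

Lemma normr_cases a b : normr a b = (a, b) \/ normr a b = ((5 - a) mod 5, (5 - b) mod 5).
Proof. unfold normr. destruct (orb _ _); auto. Qed.

Lemma cls_congr p q p' q' : p mod 5 = p' mod 5 -> q mod 5 = q' mod 5 -> cls p q = cls p' q'.
Proof. intros H1 H2; unfold cls; rewrite H1, H2; auto. Qed.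

Lemma cls_neg p q : cls (- p) (- q) = cls p q.
Proof. unfold cls.
  assert (E1 : (- p) mod 5 = (5 - p mod 5) mod 5) by (modfacts; lia).
  assert (E2 : (- q) mod 5 = (5 - q mod 5) mod 5) by (modfacts; lia).
  rewrite E1, E2. cases5 (p mod 5); cases5 (q mod 5); vm_compute; reflexivity. Qed.

Lemma equiv_rep T p q : rational T p q -> five_equiv T (act (rep (cls p q)) []).
Proof. intros H; apply rat_rep in H; tauto. Qed.

Lemma rat_cls_eq T p q T' a b : rational T p q -> rational T' a b -> cls p q = cls a b -> five_equiv T T'.
Proof. intros H1 H2 E. eapply rst_trans; [apply equiv_rep; eauto|]. rewrite E.
  apply rst_sym, equiv_rep; auto. Qed.

Ltac clstac p q := unfold cls; modfacts; cases5 (p mod 5); cases5 (q mod 5);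
  first [vm_compute; reflexivity | exfalso; lia].

Close Scope Z_scope.

Theorem proposition2p11 :
  (forall (T : list gen) (p q : Z), rational T p q -> Z.gcd p q = 1%Z ->
     (cong5 q 0 /\ pm5 p 1 -> five_equiv_rat T 1 0) /\
     (cong5 q 0 /\ pm5 p 2 -> five_equiv_rat T 2 5) /\
     (pm5 q 1 /\ cong5 p 0 -> five_equiv_rat T 0 1) /\
     (pm5 q 2 /\ cong5 p 0 -> five_equiv_rat T 5 2) /\
     (pm5 q 1 /\ cong5 p (- q) -> five_equiv_rat T (-1) 1) /\
     (pm5 q 2 /\ cong5 p (- q) -> five_equiv_rat T 3 2) /\
     (pm5 q 1 /\ cong5 p q -> five_equiv_rat T 1 1) /\
     (pm5 q 2 /\ cong5 p q -> five_equiv_rat T (-3) 2) /\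
     (pm5 q 1 /\ cong5 p (-2 * q) -> five_equiv_rat T (-2) 1) /\
     (pm5 q 2 /\ cong5 p (-2 * q) -> five_equiv_rat T 1 2) /\
     (pm5 q 1 /\ cong5 p (2 * q) -> five_equiv_rat T 2 1) /\
     (pm5 q 2 /\ cong5 p (2 * q) -> five_equiv_rat T (-1) 2))
  /\
  (forall (T T' : list gen) (p q p' q' : Z),
     rational T p q -> rational T' p' q' ->
     Z.gcd p q = 1%Z -> Z.gcd p' q' = 1%Z ->
     (five_equiv T T' <->
        (cong5 q q' /\ cong5 p p') \/ (cong5 q (- q') /\ cong5 p (- p')))).
Proof.
  split.
  - intros T p q HT _.
    repeat split; intros [H1 H2] T' HT'; eapply rat_cls_eq; eauto;
      unfold pm5, cong5 in *; clstac p q.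
  - intros T T' p q p' q' HT HT' _ _. split.
    + intros H. apply rat_rep in HT as [Hn HT]. apply rat_rep in HT' as [Hn' HT'].
      assert (E : cls p q = cls p' q').
      { apply rep_distinct; try (apply cls_in; auto).
        eapply rst_trans; [apply rst_sym, HT|]. eapply rst_trans; [exact H|exact HT']. }
      unfold cls in E.
      destruct (normr_cases (p mod 5) (q mod 5)) as [N1|N1]; destruct (normr_cases (p' mod 5) (q' mod 5)) as [N2|N2];
      rewrite N1, N2 in E; apply pair_equal_spec in E as [E1 E2]; unfold cong5;
        modfacts; first [left; split; lia | right; split; lia].
    + intros Hc. eapply rat_cls_eq; eauto. unfold cong5 in Hc.
      destruct Hc as [[H1 H2]|[H1 H2]].
      * apply cls_congr; modfacts; lia.
      * rewrite <- (cls_neg p' q'). apply cls_congr; modfacts; lia.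
Qed.
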